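(* Assume that for every company $i\in\mathcal C$, every vehicle of company $i$ can reach at least one station and $\overline{\mathcal K}_i\ne\emptyset$. Under the system optimal pricing policies $p_i$, every Nash equilibrium $x^*$ of the game $G$ satisfies $$x^*\in\arg\min_{x\in\overline{\mathcal K}}J_G(\sigma(x)),\qquad J_G(\sigma)=\tfrac12\sigma^TA_G\sigma+b_G^T\sigma .$$
   Context: Setting: $\mathcal C$ is a finite nonempty set of companies; $\mathcal M$ is a finite set of charging stations with $m=|\mathcal M|\ge2$. Company $i$ owns a finite set $\mathcal V_i$ of vehicles, $N_i=|\mathcal V_i|\ge1$, and $\mathcal F^i_j\subseteq\mathcal V_i$ is the set of its vehicles that can reach station $j$. $\mathcal P_{\mathcal M}=\{x\in\mathbb R_{\ge0}^{\mathcal M}:\sum_j x_j=1\}$. For each $i$, $\overline{\mathcal K}_i$ is the set of $x^i\in\mathcal P_{\mathcal M}$ such that for every proper subset $S\subsetneq\mathcal M$: $N_i\sum_{j\in S}x^i_j\le\max\{0,|\bigcup_{j\in S}\mathcal F^i_j|-|S|\}$. Let $\overline{\mathcal K}=\prod_{i\in\mathcal C}\overline{\mathcal K}_i$; for $x=(x^i)_{i\in\mathcal C}\in\overline{\mathcal K}$ write $x^{-i}=(x^j)_{j\ne i}$, $\sigma(x)=\sum_{i}N_ix^i$, $\sigma(x^{-i})=\sum_{j\neq i}N_jx^j$. Data: $A_G\in\mathbb R^{\mathcal M\times\mathcal M}$ diagonal positive definite, $b_G\in\mathbb R^{\mathcal M}$; for each $i$, diagonal matrices $A_i,B_i\in\mathbb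 R^{\mathcal M\times\mathcal M}$, vectors $c_i,f_i\in\mathbb R^{\mathcal M}$, and a diagonal positive semidefinite $D_i$ with $(D_i)_{jj}>0$ whenever $\mathcal F^i_j\neq\emptyset$. For a diagonal matrix $D$, $D^*$ is the diagonal matrix with $D^*_{jj}=1/D_{jj}$ if $D_{jj}\ne0$ and $0$ otherwise. System optimal pricing policies: $p_i(x^i,x^{-i})=D_i^*\big[\tfrac12\overline A_ix^i+\overline B_i\sigma(x^{-i})+\Delta_i\big]$ with $\overline A_i=N_i^2A_G-A_i$, $\overline B_i=N_iA_G-B_i$, $\Delta_i=N_ib_G-c_i-f_i$. Company cost: $J^i(x^i,x^{-i})=\tfrac12(x^i)^TA_ix^i+(x^i)^TB_i\sigma(x^{-i})+c_i^Tx^i+(x^i)^TD_ip_i(x^i,x^{-i})+f_i^Tx^i$. Game $G$: each company $i$ chooses $x^i\in\overline{\mathcal K}_i$ to minimize $J^i(x^i,x^{-i})$. A Nash equilibrium is $x^*\in\overline{\mathcal K}$ with $J^i(x^{*i},x^{*-i})\le J^i(y^i,x^{*-i})$ for all $y^i\in\overline{\mathcal K}_i$ and all $i\in\mathcal C$. *)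

(* Defs.v *)
(* Stations are 'I_m, vectors are column vectors 'cV[R]_m,
   matrices are 'M[R]_m. *)
From mathcomp Require Import all_boot all_order all_algebra.
Set Implicit Arguments. Unset Strict Implicit. Unset Printing Implicit Defensive.
Import Order.TTheory GRing.Theory Num.Theory.
Local Open Scope ring_scope.

Section Defs.
Variable R : realFieldType.
Variable m : nat.

Definition dotv (u v : 'cV[R]_m) : R := (u^T *m v) 0 0.

Definition qform (u : 'cV[R]_m) (A : 'M[R]_m) (v : 'cV[R]_m) : R :=
  (u^T *m A *m v) 0 0.

Definition diag_pinv (D : 'M[R]_m) : 'M[R]_m :=
  \matrix_(j, k) (if j == k then (if D j j != 0 then (D j j)^-1 else 0) else 0).

Definition in_simplex (x : 'cV[R]_m) : Prop :=
  (forall j, 0 <= x j 0) /\ \sum_j x j 0 = 1.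

Variable C : finType.
Variable V : C -> finType.           (* vehicles of company i *)
Definition Nv (i : C) : nat := #|V i|.

Variable F : forall i : C, 'I_m -> {set V i}.

Definition inK (i : C) (x : 'cV[R]_m) : Prop :=
  in_simplex x /\
  forall S : {set 'I_m}, S != setT ->
    (Nv i)%:R * (\sum_(j in S) x j 0)
      <= Num.max 0 (#|\bigcup_(j in S) F i j|%:R - #|S|%:R).

Definition inKbar (x : C -> 'cV[R]_m) : Prop := forall i, inK i (x i).

Definition sigma (x : C -> 'cV[R]_m) : 'cV[R]_m :=
  \sum_i (Nv i)%:R *: x i.
Definition sigma_minus (x : C -> 'cV[R]_m) (i : C) : 'cV[R]_m :=
  \sum_(k | k != i) (Nv k)%:R *: x k.

Variables (AG : 'M[R]_m) (bG : 'cV[R]_m).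
Variables (A B D : C -> 'M[R]_m) (c f : C -> 'cV[R]_m).

Definition Abar (i : C) : 'M[R]_m := ((Nv i)%:R ^+ 2) *: AG - A i.
Definition Bbar (i : C) : 'M[R]_m := (Nv i)%:R *: AG - B i.
Definition Delta (i : C) : 'cV[R]_m := (Nv i)%:R *: bG - c i - f i.

(* system optimal pricing policy p_i(x^i, x^{-i}); it depends on x^{-i}
   only through s = sigma(x^{-i}) *)
Definition price (i : C) (xi s : 'cV[R]_m) : 'cV[R]_m :=
  diag_pinv (D i) *m ((2^-1) *: (Abar i *m xi) + Bbar i *m s + Delta i).

(* company cost J^i(x^i, x^{-i}) with s = sigma(x^{-i}) *)
Definition Jcomp (i : C) (xi s : 'cV[R]_m) : R :=
  2^-1 * qform xi (A i) xi + qform xi (B i) s + dotv (c i) xi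
  + qform xi (D i) (price i xi s) + dotv (f i) xi.

Definition nash_eq (x : C -> 'cV[R]_m) : Prop :=
  inKbar x /\
  forall i (y : 'cV[R]_m), inK i y ->
    Jcomp i (x i) (sigma_minus x i) <= Jcomp i y (sigma_minus x i).

Definition JG (s : 'cV[R]_m) : R := 2^-1 * qform s AG s + dotv bG s.

End Defs.

(* Main.v *)
Require Import Defs.
From mathcomp Require Import all_boot all_order all_algebra.
From mathcomp Require Import ring lra.
Import Order.TTheory GRing.Theory Num.Theory.
Local Open Scope ring_scope.

Lemma mulmx_diagE (R : realFieldType) m (M : 'M[R]_m) (v : 'cV[R]_m) j :
  is_diag_mx M -> (M *m v) j 0 = M j j * v j 0.
Proof.
move/is_diag_mxP=> HM; rewrite mxE (bigD1 j) //= big1 ?addr0 // => k Hk.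
by rewrite HM ?mul0r // eq_sym.
Qed.

Lemma qform_diag (R : realFieldType) m (u v : 'cV[R]_m) (M : 'M[R]_m) :
  is_diag_mx M -> qform u M v = \sum_j u j 0 * M j j * v j 0.
Proof.
move=> HM; rewrite /qform -mulmxA mxE; apply: eq_bigr => j _.
by rewrite mulmx_diagE // !mxE mulrA.
Qed.

Lemma dotv_sum (R : realFieldType) m (u v : 'cV[R]_m) :
  dotv u v = \sum_j u j 0 * v j 0.
Proof. by rewrite /dotv mxE; apply: eq_bigr => j _; rewrite mxE. Qed.

Lemma JG_sum (R : realFieldType) m (AG : 'M[R]_m) bG v : is_diag_mx AG ->
  JG AG bG v = \sum_j (2^-1 * AG j j * v j 0 ^+ 2 + bG j 0 * v j 0).
Proof.
move=> H; rewrite /JG qform_diag // dotv_sum mulr_sumr -big_split /=.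
by apply: eq_bigr => j _; ring.
Qed.

Lemma diag_pinv_diag (R : realFieldType) m (M : 'M[R]_m) : is_diag_mx (diag_pinv M).
Proof. by apply/is_diag_mxP => i j Hij; rewrite mxE; case: eqP => // E; rewrite E eqxx in Hij. Qed.

Lemma mulmx_diag_sum (R : realFieldType) m (M : 'M[R]_m) (v : 'cV[R]_m) j :
  is_diag_mx M -> \sum_k M j k * v k 0 = M j j * v j 0.
Proof. by move=> H; rewrite -mulmx_diagE // mxE. Qed.

Lemma inK_zero (R : realFieldType) m (C : finType) (V : C -> finType)
  (F : forall i : C, 'I_m -> {set V i}) (D : C -> 'M[R]_m) i j (z : 'cV[R]_m) :
  (2 <= m)%N -> (1 <= Nv V i)%N ->
  (F i j != set0 -> 0 < D i j j) -> D i j j = 0 -> inK F i z -> z j 0 = 0.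
Proof.
move=> Hm HN HD HDj [[Hpos Hsum] HS].
have HF : F i j = set0.
  by apply/eqP; apply: contraT => /HD; rewrite HDj ltxx.
have HS1 : [set j] != setT.
  apply/negP => /eqP E; have := cards1 j; rewrite E cardsT card_ord => E2.
  by rewrite E2 in Hm.
have := HS _ HS1; rewrite !big_set1 HF cards0 cards1 /=.
have HN' : (1 : R) <= (Nv V i)%:R by rewrite ler1n.
have := Hpos j => H0 Hle.
have Hmax : Num.max (0:R) (0%:R - 1%:R) = 0.
  by apply/max_idPl; rewrite sub0r oppr_le0 ler01.
rewrite Hmax in Hle. nra.
Qed.

Lemma Jcomp_eq (R : realFieldType) m (C : finType) (V : C -> finType)
  (F : forall i : C, 'I_m -> {set V i})
  (AG : 'M[R]_m) (bG : 'cV[R]_m)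
  (A B D : C -> 'M[R]_m) (c f : C -> 'cV[R]_m) i (z s : 'cV[R]_m) :
  (2 <= m)%N -> (1 <= Nv V i)%N -> is_diag_mx AG -> is_diag_mx (A i) ->
  is_diag_mx (B i) -> is_diag_mx (D i) ->
  (forall j, F i j != set0 -> 0 < D i j j) -> inK F i z ->
  Jcomp V AG bG A B D c f i z s =
  JG AG bG ((Nv V i)%:R *: z + s) - JG AG bG s.
Proof.
move=> Hm HN HAG HA HB HD HDpos HK.
have HAb : is_diag_mx (Abar V AG A i).
  apply/is_diag_mxP => a b Hab; rewrite !mxE.
  by rewrite (is_diag_mxP HAG _ _ Hab) (is_diag_mxP HA _ _ Hab); ring.
have HBb : is_diag_mx (Bbar V AG B i).
  apply/is_diag_mxP => a b Hab; rewrite !mxE.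
  by rewrite (is_diag_mxP HAG _ _ Hab) (is_diag_mxP HB _ _ Hab); ring.
rewrite /Jcomp !qform_diag // !dotv_sum !JG_sum // -sumrB mulr_sumr -!big_split /=.
apply: eq_bigr => j _.
rewrite /price mulmx_diagE ?diag_pinv_diag // !mxE !mulmx_diag_sum // !mxE eqxx.
case: (eqVneq (D i j j) 0) => HDj.
  by rewrite (@inK_zero _ _ _ _ F D i j z Hm HN (HDpos j) HDj HK) /=; ring.
rewrite /=; field; exact: HDj.
Qed.
Set Implicit Arguments. Unset Strict Implicit.

Definition linG (R : realFieldType) m (AG : 'M[R]_m) (bG s d : 'cV[R]_m) :=
  \sum_j (AG j j * s j 0 + bG j 0) * d j 0.
Definition QG (R : realFieldType) m (AG : 'M[R]_m) (d : 'cV[R]_m) :=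
  \sum_j AG j j * d j 0 ^+ 2.

Lemma JG_add (R : realFieldType) m (AG : 'M[R]_m) (bG s d : 'cV[R]_m) :
  is_diag_mx AG ->
  JG AG bG (s + d) = JG AG bG s + linG AG bG s d + 2^-1 * QG AG d.
Proof.
move=> H; rewrite !JG_sum // /linG /QG mulr_sumr -!big_split /=.
by apply: eq_bigr => j _; rewrite !mxE; field.
Qed.

Lemma QG_scale (R : realFieldType) m (AG : 'M[R]_m) k (d : 'cV[R]_m) :
  QG AG (k *: d) = k ^+ 2 * QG AG d.
Proof. by rewrite /QG mulr_sumr; apply: eq_bigr => j _; rewrite !mxE; ring. Qed.

Lemma QG_ge0 (R : realFieldType) m (AG : 'M[R]_m) (d : 'cV[R]_m) :
  (forall j, 0 < AG j j) -> 0 <= QG AG d.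
Proof.
move=> H; apply: sumr_ge0 => j _; apply: mulr_ge0; first exact: ltW.
exact: sqr_ge0.
Qed.

Lemma linG_sum (R : realFieldType) m (C : finType) (AG : 'M[R]_m) (bG s : 'cV[R]_m)
  (k : C -> R) (d : C -> 'cV[R]_m) :
  linG AG bG s (\sum_i k i *: d i) = \sum_i k i * linG AG bG s (d i).
Proof.
rewrite /linG.
transitivity (\sum_j \sum_i (AG j j * s j 0 + bG j 0) * (k i * d i j 0)).
  by apply: eq_bigr => j _; rewrite summxE mulr_sumr; apply: eq_bigr => i _; rewrite !mxE.
rewrite exchange_big /=; apply: eq_bigr => i _; rewrite mulr_sumr.
by apply: eq_bigr => j _; ring.
Qed.

Lemma lim_arg (R : realFieldType) (L q : R) : 0 <= q ->
  (forall t, 0 < t <= 1 -> 0 <= L + t * q) -> 0 <= L.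
Proof.
move=> Hq H; case: (lerP 0 L) => // HL.
have HqL : 0 < q - L by lra.
have Ht : 0 < - L / (q - L) <= 1.
  apply/andP; split; first by apply: divr_gt0; lra.
  by rewrite ler_pdivrMr // mul1r; lra.
have := H _ Ht.
have -> : L + - L / (q - L) * q = (L * (q - L) - L * q) / (q - L).
  by field; rewrite lt0r_neq0.
rewrite pmulr_lge0 ?invr_gt0 //; nra.
Qed.

Lemma inK_convex (R : realFieldType) m (C : finType) (V : C -> finType)
  (F : forall i : C, 'I_m -> {set V i}) i (a b : 'cV[R]_m) t :
  inK F i a -> inK F i b -> 0 <= t <= 1 -> inK F i (a + t *: (b - a)).
Proof.
move=> [[Ha1 Ha2] Ha3] [[Hb1 Hb2] Hb3] /andP[Ht0 Ht1].
have E : forall P : pred 'I_m, \sum_(j | P j) (a + t *: (b - a)) j 0 =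
    \sum_(j | P j) a j 0 + t * (\sum_(j | P j) b j 0 - \sum_(j | P j) a j 0).
  move=> P; rewrite -sumrB mulr_sumr -big_split /=.
  by apply: eq_bigr => j _; rewrite !mxE.
split; first split.
- move=> j; rewrite !mxE; have := Ha1 j; have := Hb1 j; nra.
- by rewrite E Ha2 Hb2 subrr mulr0 addr0.
- move=> S HS; rewrite E; have := Ha3 S HS; have := Hb3 S HS.
  set M := Num.max _ _; set sa := \sum_(j in S) a j 0; set sb := \sum_(j in S) b j 0.
  have HN : 0 <= (Nv V i)%:R :> R by [].
  nra.
Qed.
Unset Implicit Arguments. Set Strict Implicit.

Lemma linG_scale (R : realFieldType) m (AG : 'M[R]_m) (bG s : 'cV[R]_m) k d :
  linG AG bG s (k *: d) = k * linG AG bG s d.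
Proof. by rewrite /linG mulr_sumr; apply: eq_bigr => j _; rewrite !mxE; ring. Qed.

Theorem theorem2 (R : realFieldType) (m : nat) (C : finType) (V : C -> finType)
  (F : forall i : C, 'I_m -> {set V i})
  (AG : 'M[R]_m) (bG : 'cV[R]_m)
  (A B D : C -> 'M[R]_m) (c f : C -> 'cV[R]_m)
  (Hm : (2 <= m)%N)
  (HC : (0 < #|C|)%N)
  (HN : forall i, (1 <= Nv V i)%N)
  (HAGd : is_diag_mx AG) (HAGpd : forall j, 0 < AG j j)
  (HAd : forall i, is_diag_mx (A i)) (HBd : forall i, is_diag_mx (B i))
  (HDd : forall i, is_diag_mx (D i)) (HDpsd : forall i j, 0 <= D i j j)
  (HDpos : forall i j, F i j != set0 -> 0 < D i j j)
  (Hreach : forall i (v : V i), exists j, v \in F i j)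
  (HKne : forall i, exists x : 'cV[R]_m, inK F i x)
  (xs : C -> 'cV[R]_m)
  (HNE : nash_eq F AG bG A B D c f xs) :
  inKbar (R:=R) F xs /\
  forall y : C -> 'cV[R]_m, inKbar (R:=R) F y -> JG AG bG (sigma V xs) <= JG AG bG (sigma V y).
Proof.
case: HNE => HK HNE; split => // y Hy.
have Hd : forall i, 0 <= linG AG bG (sigma V xs) (y i - xs i).
  move=> i.
  have HNi : 0 < (Nv V i)%:R :> R by rewrite ltr0n; exact: HN.
  have HQ := QG_ge0 (y i - xs i) HAGpd.
  apply: (@lim_arg _ _ ((Nv V i)%:R * 2^-1 * QG AG (y i - xs i))).
    by apply: mulr_ge0 => //; apply: mulr_ge0; [exact: ltW | rewrite invr_ge0 ler0n].
  move=> t /andP[Ht0 Ht1].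
  have Hz := inK_convex (HK i) (Hy i) (t:=t) ltac:(apply/andP; split => //; exact: ltW).
  have E1 z : inK F i z -> Jcomp V AG bG A B D c f i z (sigma_minus V xs i) =
     JG AG bG ((Nv V i)%:R *: z + sigma_minus V xs i) - JG AG bG (sigma_minus V xs i).
    move=> Hz'.
    exact: (@Jcomp_eq R m C V F AG bG A B D c f i z _ Hm (HN i) HAGd (HAd i) (HBd i) (HDd i) (HDpos i) Hz').
  have := HNE i _ Hz; rewrite (E1 _ (HK i)) (E1 _ Hz).
  have -> : (Nv V i)%:R *: xs i + sigma_minus V xs i = sigma V xs.
    by rewrite /sigma /sigma_minus [in RHS](bigD1 i).
  have -> : (Nv V i)%:R *: (xs i + t *: (y i - xs i)) + sigma_minus V xs i
       = sigma V xs + ((Nv V i)%:R * t) *: (y i - xs i).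
    rewrite /sigma /sigma_minus [in RHS](bigD1 i) //=.
    by apply/matrixP => a b; rewrite !mxE; ring.
  rewrite JG_add // QG_scale linG_scale.
  set L := linG _ _ _ _; set Q := QG _ _.
  move=> Hle.
  have Hm' : 0 <= (Nv V i)%:R * t * L + 2^-1 * (((Nv V i)%:R * t) ^+ 2 * Q) by lra.
  have HNt : 0 < (Nv V i)%:R * t by apply: mulr_gt0.
  rewrite -(pmulr_rge0 _ HNt).
  suff -> : (Nv V i)%:R * t * (L + t * ((Nv V i)%:R * 2^-1 * Q)) =
     (Nv V i)%:R * t * L + 2^-1 * (((Nv V i)%:R * t) ^+ 2 * Q) by [].
  ring.
have Hsy : sigma V y = sigma V xs + \sum_i (Nv V i)%:R *: (y i - xs i).
  apply/matrixP => a b; rewrite /sigma mxE !summxE -big_split /=.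
  by apply: eq_bigr => i _; rewrite !mxE; ring.
rewrite Hsy JG_add // linG_sum.
have H1 : 0 <= \sum_i (Nv V i)%:R * linG AG bG (sigma V xs) (y i - xs i).
  by apply: sumr_ge0 => i _; apply: mulr_ge0.
have H2 := QG_ge0 (\sum_i (Nv V i)%:R *: (y i - xs i)) HAGpd.
lra.
Qed.
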